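(* Let $V$ be a finite-dimensional real vector space with a non-degenerate symmetric bilinear form $\langle\cdot,\cdot\rangle$, and let $J:V\to V$ be linear, self-adjoint with respect to $\langle\cdot,\cdot\rangle$, with $J^2=-\operatorname{id}$. Let $V_+\subset V$ be a subspace on which $g:=\langle\cdot,\cdot\rangle|_{V_+}$ is positive definite, such that $V=V_+\oplus JV_+$ and $V_+\perp JV_+$. Let $T:V_+\to V_+$ be linear and set $\tilde V_+:=\{v+JTv: v\in V_+\}$. Then: (1) $\tilde V_+\perp J\tilde V_+$ if and only if $T$ is skew-adjoint with respect to $g$; (2) the restriction of $\langle\cdot,\cdot\rangle$ to $\tilde V_+$ is positive definite if and only if $|T|<1$, where $|T|$ denotes the operator norm of $T$ with respect to $g$. *)

(* Defs.v *)
From HB Require Import structures.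
From mathcomp Require Import all_boot all_order all_algebra.
From mathcomp Require Import classical_sets reals.
Set Implicit Arguments. Unset Strict Implicit. Unset Printing Implicit Defensive.
Import Order.TTheory GRing.Theory Num.Theory.
Local Open Scope ring_scope.
Local Open Scope classical_set_scope.

Definition graph_vec (R : realType) (V : vectType R) (Vp : {vspace V})
  (J : 'End(V)) (T : 'End(subvs_of Vp)) (v : subvs_of Vp) : V :=
  vsval v + J (vsval (T v)).

Definition opnorm (R : realType) (V : vectType R) (b : V -> V -> R)
  (Vp : {vspace V}) (T : 'End(subvs_of Vp)) : R :=
  sup [set Num.sqrt (b (vsval (T v)) (vsval (T v))) |
        v in [set v : subvs_of Vp | b (vsval v) (vsval v) <= 1]].

(* Main.v *)
Require Import Defs.
From HB Require Import structures.
From mathcomp Require Import all_boot all_order all_algebra.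
From mathcomp Require Import classical_sets reals ring lra zify.
Set Implicit Arguments. Unset Strict Implicit. Unset Printing Implicit Defensive.
Import Order.TTheory GRing.Theory Num.Theory.
Local Open Scope ring_scope.

Section Form.
Variables (R : realType) (W : vectType R) (F : W -> W -> R).
Hypothesis F_lin : forall (a : R) (u u' v : W), F (a *: u + u') v = a * F u v + F u' v.
Hypothesis F_sym : forall u v, F u v = F v u.

Lemma F0l v : F 0 v = 0.
Proof. have := F_lin 1 0 0 v. rewrite scale1r addr0 mul1r. lra. Qed.
Lemma FDl u u' v : F (u + u') v = F u v + F u' v.
Proof. by rewrite -[u in LHS]scale1r F_lin mul1r. Qed.
Lemma FZl a u v : F (a *: u) v = a * F u v.
Proof. by rewrite -[_ *: u]addr0 F_lin F0l addr0. Qed.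
Lemma FNl u v : F (- u) v = - F u v.
Proof. by rewrite -scaleN1r FZl mulN1r. Qed.
Lemma FDr u v v' : F u (v + v') = F u v + F u v'.
Proof. by rewrite F_sym FDl !(F_sym _ u). Qed.
Lemma FZr a u v : F u (a *: v) = a * F u v.
Proof. by rewrite F_sym FZl F_sym. Qed.
Lemma FNr u v : F u (- v) = - F u v.
Proof. by rewrite F_sym FNl F_sym. Qed.
Lemma F0r v : F v 0 = 0.
Proof. by rewrite F_sym F0l. Qed.
End Form.

Section Key.
Variables (R : realType) (W : vectType R) (A B : W -> W -> R).
Hypothesis A_lin : forall (a : R) (u u' v : W), A (a *: u + u') v = a * A u v + A u' v.
Hypothesis A_sym : forall u v, A u v = A v u.
Hypothesis A_pos : forall v, v != 0 -> 0 < A v v.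
Hypothesis B_lin : forall (a : R) (u u' v : W), B (a *: u + u') v = a * B u v + B u' v.
Hypothesis B_sym : forall u v, B u v = B v u.
Hypothesis B_psd : forall v, 0 <= B v v.

Lemma A_psd v : 0 <= A v v.
Proof. have [->|/A_pos/ltW //] := eqVneq v 0. by rewrite F0l. Qed.

Definition pf (e : W) (v : W) : W := v - (A v e / A e e) *: e.

Lemma pf_lin e : linear (pf e).
Proof.
move=> a u v; rewrite /pf A_lin mulrDl scalerDl scalerBr !scalerA -!mulrA.
by rewrite opprD addrACA.
Qed.

HB.instance Definition _ (e : W) := GRing.isLinear.Build R W W *:%R (pf e) (pf_lin e).

Lemma key_dim n : forall U : {vspace W}, (\dim U <= n)%N ->
  exists K, 0 <= K /\ forall v, v \in U -> B v v <= K * A v v.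
Proof.
elim: n => [|n IH] U hU.
  move: hU; rewrite leqn0 dimv_eq0 => /eqP ->.
  exists 0; split => // v; rewrite memv0 => /eqP ->. by rewrite (F0l B_lin) mul0r.
have [->|U0] := eqVneq U 0%VS.
  exists 0; split => // v; rewrite memv0 => /eqP ->. by rewrite (F0l B_lin) mul0r.
set e := vpick U.
have e0 : e != 0 by rewrite vpick0.
have eU : e \in U := memv_pick U.
have c0 : 0 < A e e := A_pos e0.
set f := linfun (pf e).
have fe : e \in lker f by rewrite memv_ker lfunE /= /pf divff ?gt_eqF // scale1r subrr.
have h1 : (1 <= \dim (U :&: lker f))%N.
  apply: (@leq_trans (\dim <[e]>)); first by rewrite dim_vline e0.
  by apply: dimvS; rewrite -memvE memv_cap eU fe.
have := limg_ker_dim f U => hd.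
have [K' [K'0 HK']] : exists K, 0 <= K /\ forall v, v \in (f @: U)%VS -> B v v <= K * A v v.
  apply: IH; rewrite -ltnS; apply: leq_trans hU; rewrite -hd; lia.
set d := B e e / A e e.
have d0 : 0 <= d by rewrite divr_ge0 // ltW.
have dc : d * A e e = B e e by rewrite /d mulfVK // gt_eqF.
exists (2 * K' + 2 * d); split; first lra.
move=> v vU.
set t := A v e / A e e.
set u := pf e v.
have uU : u \in (f @: U)%VS by have := memv_img f vU; rewrite lfunE.
have vE : v = u + t *: e by rewrite /u /pf subrK.
have Aue : A u e = 0 by rewrite /u /pf FDl // FNl // FZl // /t mulfVK ?gt_eqF // subrr.
clearbody u t.
have Avv : A v v = A u u + t ^+ 2 * A e e.
  rewrite vE FDl // !FDr // !FZl // !FZr // (A_sym e u) Aue; ring.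
have Bvv : B v v <= 2 * B u u + 2 * (t ^+ 2 * B e e).
  have := B_psd (u - t *: e).
  rewrite vE !(FDl B_lin, FDr B_lin B_sym, FNl B_lin, FNr B_lin B_sym, FZl B_lin, FZr B_lin B_sym).
  rewrite (B_sym e u). nra.
have := HK' u uU. have := A_psd u. have t2 : 0 <= t ^+ 2 by rewrite sqr_ge0.
move=> Au0 Hu; have p1 : 0 <= K' * (t ^+ 2 * A e e) by rewrite mulr_ge0 // mulr_ge0 // ltW.
have p2 : 0 <= d * A u u by rewrite mulr_ge0.
have p3 : 0 <= d * (t ^+ 2 * A e e) by rewrite mulr_ge0 // mulr_ge0 // ltW.
have p4 : K' * B u u <= K' * (K' * A u u) by rewrite ler_wpM2l.
move: Bvv; rewrite -dc Avv. nra.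
Qed.
End Key.

Lemma key_full (R : realType) (W : vectType R) (A B : W -> W -> R)
  (A_lin : forall (a : R) (u u' v : W), A (a *: u + u') v = a * A u v + A u' v)
  (A_sym : forall u v, A u v = A v u)
  (A_pos : forall v, v != 0 -> 0 < A v v)
  (B_lin : forall (a : R) (u u' v : W), B (a *: u + u') v = a * B u v + B u' v)
  (B_sym : forall u v, B u v = B v u)
  (B_psd : forall v, 0 <= B v v) :
  exists K, 0 <= K /\ forall v, B v v <= K * A v v.
Proof.
have [K [K0 HK]] := key_dim A_lin A_sym A_pos B_lin B_sym B_psd (leqnn (\dim (@fullv R W))).
by exists K; split => // v; apply: HK; rewrite memvf.
Qed.

Unset Implicit Arguments.
Unset Strict Implicit.

Theorem lemma9 (R : realType) (V : vectType R) (b : V -> V -> R)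
  (b_linl : forall (a : R) (u u' v : V), b (a *: u + u') v = a * b u v + b u' v)
  (b_sym : forall u v : V, b u v = b v u)
  (b_nondeg : forall u : V, (forall v : V, b u v = 0) -> u = 0)
  (J : 'End(V))
  (J_selfadj : forall u v : V, b (J u) v = b u (J v))
  (J_sq : forall v : V, J (J v) = - v)
  (Vp : {vspace V})
  (Vp_posdef : forall v : V, v \in Vp -> v != 0 -> 0 < b v v)
  (Vp_sum : (Vp + (J @: Vp))%VS = fullv)
  (Vp_direct : directv (Vp + (J @: Vp)))
  (Vp_perp : forall u w : V, u \in Vp -> w \in Vp -> b u (J w) = 0)
  (T : 'End(subvs_of Vp)) :
  ((forall v w : subvs_of Vp,
       b (graph_vec J T v) (J (graph_vec J T w)) = 0) <->
   (forall v w : subvs_of Vp,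
       b (vsval (T v)) (vsval w) = - b (vsval v) (vsval (T w))))
  /\
  ((forall v : subvs_of Vp, graph_vec J T v != 0 ->
       0 < b (graph_vec J T v) (graph_vec J T v)) <->
   opnorm b T < 1).
Proof.
pose g (v w : subvs_of Vp) := b (vsval v) (vsval w).
have g_lin : forall a u u' v, g (a *: u + u') v = a * g u v + g u' v.
  by move=> a u u' v; rewrite /g linearP /= b_linl.
have g_sym : forall u v, g u v = g v u by move=> u v; rewrite /g b_sym.
have g_pos : forall v, v != 0 -> 0 < g v v.
  move=> v v0; apply: Vp_posdef; first exact: subvsP.
  by apply: contra v0 => /eqP h; apply/eqP; apply: subvs_inj; rewrite h linear0.
pose gT (v w : subvs_of Vp) := g (T v) (T w).
have gT_lin : forall a u u' v, gT (a *: u + u') v = a * gT u v + gT u' v.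
  by move=> a u u' v; rewrite /gT linearP /= g_lin.
have gT_sym : forall u v, gT u v = gT v u by move=> u v; rewrite /gT g_sym.
have g_psd : forall v, 0 <= g v v.
  by move=> v; have [->|/g_pos/ltW //] := eqVneq v 0; rewrite (F0l g_lin).
have gT_psd : forall v, 0 <= gT v v by move=> v; exact: g_psd.
have bDl := FDl b_linl; have bDr := FDr b_linl b_sym.
have bNl := FNl b_linl; have bNr := FNr b_linl b_sym.
have hperp : forall v w : subvs_of Vp, b (graph_vec J T v) (J (graph_vec J T w)) =
   - b (vsval v) (vsval (T w)) - b (vsval (T v)) (vsval w).
  move=> v w; rewrite /graph_vec linearD /= J_sq !(bDl, bDr, bNr).
  rewrite Vp_perp ?subvsP // J_selfadj J_sq bNr.
  rewrite (b_sym (J (vsval (T v)))) Vp_perp ?subvsP //. lra.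
have hquad : forall v, b (graph_vec J T v) (graph_vec J T v) = g v v - gT v v.
  move=> v; rewrite /graph_vec /gT /g !(bDl, bDr).
  rewrite Vp_perp ?subvsP // (b_sym (J _)) Vp_perp ?subvsP //.
  rewrite J_selfadj J_sq bNr; lra.
have hzero : forall v, graph_vec J T v = 0 -> v = 0.
  move=> v h; have : b (graph_vec J T v) (vsval v) = g v v.
    rewrite /graph_vec bDl (b_sym (J _)) Vp_perp ?subvsP //; by rewrite addr0.
  rewrite h (F0l b_linl) => /esym gv0.
  by have [//|/g_pos] := eqVneq v 0; rewrite gv0 ltxx.
have g0 : graph_vec J T 0 = 0 by rewrite /graph_vec !linear0 addr0.
split.
  split => H v w.
    have := H v w; rewrite hperp; lra.
  by rewrite hperp H; lra.
have [K0 [K00 HK0]] := key_full g_lin g_sym g_pos gT_lin gT_sym gT_psd.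
rewrite /opnorm; set S := (X in sup X).
have Sne : (S !=set0)%classic.
  exists (Num.sqrt (gT 0 0)); exists 0 => //=. by rewrite (F0l b_linl).
have Sub : forall x, S x -> 0 <= x /\ x <= Num.sqrt K0.
  move=> x [v /= hv <-]; split; first exact: sqrtr_ge0.
  rewrite ler_sqrt //; apply: le_trans (HK0 v) _.
  have := g_psd v; rewrite /g; nra.
have hsup : has_sup S by split => //; exists (Num.sqrt K0) => x /Sub [].
split.
  move=> H.
  have H' : forall v, v != 0 -> gT v v < g v v.
    move=> v v0; rewrite -subr_gt0 -hquad; apply: H.
    by apply: contra v0 => /eqP /hzero ->.
  have A_lin : forall a u u' v, (g (a *: u + u') v - gT (a *: u + u') v) =
       a * (g u v - gT u v) + (g u' v - gT u' v).
    by move=> a u u' v; rewrite g_lin gT_lin; ring.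
  have A_sym : forall u v, g u v - gT u v = g v u - gT v u.
    by move=> u v; rewrite g_sym gT_sym.
  have A_pos : forall v, v != 0 -> 0 < g v v - gT v v.
    by move=> v /H'; rewrite subr_gt0.
  have [K [K0' HK]] := key_full (A := fun u v => g u v - gT u v) A_lin A_sym A_pos
     g_lin g_sym g_psd.
  have K1 : 0 < K + 1 by lra.
  apply: (@le_lt_trans _ _ (Num.sqrt (K / (K + 1)))).
    apply: ge_sup => // x [v /= hv <-].
    rewrite ler_sqrt ?divr_ge0 ?ler_pdivlMr //; last lra.
    have p : K * g v v <= K * 1 := ler_wpM2l K0' hv.
    have q := A_psd (A := fun u v => g u v - gT u v) A_lin A_pos v.
    have := HK v; have := gT_psd v; rewrite /gT /g /= in p q *; nra.
  rewrite -[X in _ < X]sqrtr1 ltr_sqrt ?ltr01 // ltr_pdivrMr //; lra.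
move=> hlt v gv0.
have v0 : v != 0 by apply: contra gv0 => /eqP ->; rewrite g0.
rewrite hquad subr_gt0.
have c0 := g_pos v v0.
set s := Num.sqrt (g v v).
have s0 : 0 < s by rewrite sqrtr_gt0.
have ss : s ^+ 2 = g v v by rewrite sqr_sqrtr // ltW.
set w := s^-1 *: v.
have gw : g w w = 1.
  rewrite /w (FZl g_lin) (FZr g_lin g_sym) -ss; by field; rewrite gt_eqF.
have gTw : gT v v = s ^+ 2 * gT w w.
  rewrite /w (FZl gT_lin) (FZr gT_lin gT_sym); by field; rewrite gt_eqF.
have Sw : S (Num.sqrt (gT w w)) by exists w => //=; rewrite /g in gw; rewrite gw.
have : Num.sqrt (gT w w) < 1 by apply: le_lt_trans hlt; exact: sup_upper_bound.
rewrite -sqrtr1 ltr_sqrt ?ltr01 // => hw.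
rewrite gTw -ss; nra.
Qed.
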